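(* Under all the hypotheses of the scalar refinement lemma (a presented PROP $\mathcal{P}^{\mathrm{src}}/\mathcal{R}^{\mathrm{src}}$ with a faithful strict symmetric monoidal interpretation into an endomorphism-only symmetric monoidal subcategory $\mathcal{C}^{\mathrm{src}}\subseteq\mathbf{FdHilb}$ whose scalar group $\mathcal{C}^{\mathrm{src}}(0,0)$ is cyclic of order $m$ generated by the interpretation of a source scalar $s$, which has no hidden phases and all of whose morphisms are invertible in $\mathcal{C}^{\mathrm{src}}$; with $\ell\ge1$, $\zeta$ of order $m\ell$ and $r$ with $\zeta^r=[\![s]\!]_{\mathrm{src}}$), let $C_1,C_2$ be morphisms built only from source generators (no occurrence of $\omega$). If $C_1=C_2$ is derivable in the scalar-refined presentation $\mathcal{P}^{\mathrm{src},\sharp}/\mathcal{R}^{\mathrm{src},\sharp}$, then $C_1=C_2$ is already derivable in $\mathcal{P}^{\mathrm{src}}/\mathcal{R}^{\mathrm{src}}$.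
   Context: A PROP is a strict symmetric monoidal category with objects the natural numbers, $n\otimes m=n+m$, unit $0$; a presented PROP $\mathcal{P}/\mathcal{R}$ is the free PROP on a signature of generators modulo the congruence generated by equations $\mathcal{R}$. $\mathbf{FdHilb}$ is the strict symmetric monoidal category of finite-dimensional Hilbert spaces with $n$ interpreted as $(\mathbb{C}^d)^{\otimes n}$. No hidden phases means: whenever $\lambda\in\mathrm{U}(1)$ and $\lambda\,\mathrm{id}_n\in\mathcal{C}^{\mathrm{src}}(n,n)$, then $\lambda\in\mathcal{C}^{\mathrm{src}}(0,0)$. Faithful means injective on hom-sets. The scalar-refined presentation $\mathcal{P}^{\mathrm{src},\sharp}/\mathcal{R}^{\mathrm{src},\sharp}$ adjoins to $\mathcal{P}^{\mathrm{src}}/\mathcal{R}^{\mathrm{src}}$ a new generator $\omega:0\to0$ and the relations $\omega^{m\ell}=\mathrm{id}_0$ and $\omega^r=s$ ($\omega^k$ the $k$-fold composite of $\omega$). *)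

(* Defs.v *)
(* Presented PROPs as a deep embedding: string-diagram
   terms over a signature, derivability as the congruence generated by the
   strict-symmetric-monoidal (PROP) axioms plus the given equations, and the
   standard strict symmetric monoidal interpretation into FdHilb, where the
   object n is (C^d)^{(x)n} and a morphism n -> m is represented by its matrix
   in the computational basis, indexed by words (tuples) of length m (rows)
   and n (columns) over 'I_d. *)
From HB Require Import structures.
From mathcomp Require Import all_boot all_algebra.
From mathcomp Require Import Rstruct complex.
Set Implicit Arguments.
Unset Strict Implicit.
Unset Printing Implicit Defensive.
Import GRing.Theory Num.Theory.
Local Open Scope ring_scope.

Definition CC := (Rdefinitions.R)[i].

(* Terms of the free PROP on a signature with generator set G.
   Tcomp f g is the diagrammatic composite "f then g" (= g o f). *)
Inductive term (G : Type) : Type :=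
| Tid : nat -> term G
| Tswap : nat -> nat -> term G
| Tgen : G -> term G
| Tcomp : term G -> term G -> term G
| Ttens : term G -> term G -> term G.
Arguments Tid {G}.
Arguments Tswap {G}.

Fixpoint tmap (G G' : Type) (h : G -> G') (t : term G) : term G' :=
  match t with
  | Tid n => Tid n
  | Tswap a b => Tswap a b
  | Tgen g => Tgen (h g)
  | Tcomp f g => Tcomp (tmap h f) (tmap h g)
  | Ttens f g => Ttens (tmap h f) (tmap h g)
  end.

Section Syntax.
Variables (G : Type) (gdom gcod : G -> nat).

Fixpoint tdom (t : term G) : nat :=
  match t with
  | Tid n => n
  | Tswap a b => (a + b)%N
  | Tgen g => gdom g
  | Tcomp f _ => tdom f
  | Ttens f g => (tdom f + tdom g)%N
  end.

Fixpoint tcod (t : term G) : nat :=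
  match t with
  | Tid n => n
  | Tswap a b => (b + a)%N
  | Tgen g => gcod g
  | Tcomp _ g => tcod g
  | Ttens f g => (tcod f + tcod g)%N
  end.

Fixpoint wt (t : term G) : bool :=
  match t with
  | Tcomp f g => [&& wt f, wt g & tcod f == tdom g]
  | Ttens f g => wt f && wt g
  | _ => true
  end.

Definition hasType (t : term G) (n m : nat) : bool :=
  [&& wt t, tdom t == n & tcod t == m].

Definition eqns := nat -> nat -> term G -> term G -> Prop.

Inductive prov (R : eqns) : nat -> nat -> term G -> term G -> Prop :=
| pv_ax n m f g : R n m f g -> hasType f n m -> hasType g n m -> prov R n m f g
| pv_refl n m f : hasType f n m -> prov R n m f f
| pv_sym n m f g : prov R n m f g -> prov R n m g f
| pv_trans n m f g h : prov R n m f g -> prov R n m g h -> prov R n m f h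
| pv_comp n m k f f' g g' :
    prov R n m f f' -> prov R m k g g' -> prov R n k (Tcomp f g) (Tcomp f' g')
| pv_tens a b c e f f' g g' :
    prov R a b f f' -> prov R c e g g' ->
    prov R (a + c) (b + e) (Ttens f g) (Ttens f' g')
| pv_compA n m k p f g h :
    hasType f n m -> hasType g m k -> hasType h k p ->
    prov R n p (Tcomp (Tcomp f g) h) (Tcomp f (Tcomp g h))
| pv_id_l n m f : hasType f n m -> prov R n m (Tcomp (Tid n) f) f
| pv_id_r n m f : hasType f n m -> prov R n m (Tcomp f (Tid m)) f
| pv_tensA a b c e p q f g h :
    hasType f a b -> hasType g c e -> hasType h p q ->
    prov R (a + c + p) (b + e + q) (Ttens (Ttens f g) h) (Ttens f (Ttens g h))
| pv_tens_unit_l n m f : hasType f n m -> prov R n m (Ttens (Tid 0) f) f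
| pv_tens_unit_r n m f : hasType f n m -> prov R n m (Ttens f (Tid 0)) f
| pv_tens_id a b : prov R (a + b) (a + b) (Ttens (Tid a) (Tid b)) (Tid (a + b))
| pv_interchange a b c e p q f f' g g' :
    hasType f a b -> hasType f' b c -> hasType g e p -> hasType g' p q ->
    prov R (a + e) (c + q) (Tcomp (Ttens f g) (Ttens f' g'))
                           (Ttens (Tcomp f f') (Tcomp g g'))
| pv_swap_inv a b :
    prov R (a + b) (a + b) (Tcomp (Tswap a b) (Tswap b a)) (Tid (a + b))
| pv_swap_nat a b c e f g :
    hasType f a b -> hasType g c e ->
    prov R (a + c) (e + b) (Tcomp (Ttens f g) (Tswap b e))
                           (Tcomp (Tswap a c) (Ttens g f))
| pv_swap_unit a : prov R a a (Tswap a 0) (Tid a)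
| pv_hex1 a b c :
    prov R (a + (b + c)) (b + c + a) (Tswap a (b + c))
         (Tcomp (Ttens (Tswap a b) (Tid c)) (Ttens (Tid b) (Tswap a c)))
| pv_hex2 a b c :
    prov R (a + b + c) (c + (a + b)) (Tswap (a + b) c)
         (Tcomp (Ttens (Tid a) (Tswap b c)) (Ttens (Tswap a c) (Tid b))).

End Syntax.

Section Semantics.
Variables (G : Type) (gdom gcod : G -> nat) (d : nat).
(* interpretation of the generators: the matrix entry <y| [[g]] |x> *)
Variable I : G -> seq 'I_d -> seq 'I_d -> CC.

Fixpoint sem (t : term G) : seq 'I_d -> seq 'I_d -> CC :=
  match t with
  | Tid n => fun y x => (y == x)%:R
  | Tswap a b => fun y x => (y == drop a x ++ take a x)%:R
  | Tgen g => I g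
  | Tcomp f g => fun z x =>
      \sum_(y : (tcod gcod f).-tuple 'I_d) sem g z y * sem f (val y) x
  | Ttens f g => fun z x =>
      sem f (take (tcod gcod f) z) (take (tdom gdom f) x) *
      sem g (drop (tcod gcod f) z) (drop (tdom gdom f) x)
  end.
End Semantics.

Definition sem_eq (d n m : nat) (F F' : seq 'I_d -> seq 'I_d -> CC) : Prop :=
  forall (y : m.-tuple 'I_d) (x : n.-tuple 'I_d), F y x = F' y x.

Definition scal_id (d : nat) (lam : CC) : seq 'I_d -> seq 'I_d -> CC :=
  fun y x => lam * (y == x)%:R.

Definition scalar_of (d : nat) (F : seq 'I_d -> seq 'I_d -> CC) : CC := F [::] [::].

(* Scalar refinement: new generator omega : 0 -> 0 (None); source
   generators are embedded via Some. *)
Definition sdom (G : Type) (gdom : G -> nat) (o : option G) : nat :=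
  if o is Some g then gdom g else 0%N.

Definition omega_pow (G : Type) (k : nat) : term (option G) :=
  iter k (fun t => Tcomp (Tgen None) t) (Tid 0).

Inductive Rsharp (G : Type) (R : eqns G) (s : term G) (m l r : nat)
  : eqns (option G) :=
| rs_src n n' u1 u2 : R n n' u1 u2 -> Rsharp R s m l r n n' (tmap Some u1) (tmap Some u2)
| rs_order : Rsharp R s m l r 0 0 (omega_pow G (m * l)) (Tid 0)
| rs_root : Rsharp R s m l r 0 0 (omega_pow G r) (tmap Some s).

(* Main.v *)
Require Import Defs.
From HB Require Import structures.
From mathcomp Require Import all_boot all_algebra.
From mathcomp Require Import Rstruct complex.
From mathcomp Require Import zify ring.
Set Implicit Arguments. Unset Strict Implicit.
Import GRing.Theory Num.Theory.


Section Gen.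
Variables (G : Type) (gdom gcod : G -> nat) (R : eqns G).
Local Notation hT := (hasType gdom gcod).
Local Notation pv := (prov gdom gcod R).

Lemma hT_cast f n m n' m' : n = n' -> m = m' -> hT f n m -> hT f n' m'.
Proof. by move=> -> ->. Qed.
Lemma pv_cast n m n' m' f g : n = n' -> m = m' -> pv n m f g -> pv n' m' f g.
Proof. by move=> -> ->. Qed.
Lemma hT_id n : hT (Tid n) n n. Proof. by rewrite /hasType /= !eqxx. Qed.
Lemma hT_swap a b : hT (Tswap a b) (a+b) (b+a). Proof. by rewrite /hasType /= !eqxx. Qed.
Lemma hT_tens f g a b c e : hT f a b -> hT g c e -> hT (Ttens f g) (a+c) (b+e).
Proof.
rewrite /hasType /= => /and3P[w1 /eqP-> /eqP->] /and3P[w2 /eqP-> /eqP->].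
by rewrite w1 w2 !eqxx.
Qed.
Lemma hT_comp f g a b c : hT f a b -> hT g b c -> hT (Tcomp f g) a c.
Proof.
rewrite /hasType /= => /and3P[w1 /eqP-> /eqP->] /and3P[w2 /eqP-> /eqP->].
by rewrite w1 w2 !eqxx.
Qed.

Lemma prov_typed n m f g : pv n m f g -> hT f n m /\ hT g n m.
Proof.
elim=> {n m f g}.
- by move=> n m f g _ ? ?.
- by move=> n m f ?; split.
- by move=> n m f g _ [].
- by move=> n m f g h _ [? _] _ [_ ?]; split.
- by move=> n m k f f' g g' _ [? ?] _ [? ?]; split; apply: hT_comp; eauto.
- by move=> a b c e f f' g g' _ [? ?] _ [? ?]; split; apply: hT_tens.
- move=> n m k p f g h Hf Hg Hh; split; apply: hT_comp; try apply: hT_comp; eauto.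
- by move=> n m f Hf; split=> //; apply: hT_comp (hT_id n) Hf.
- by move=> n m f Hf; split=> //; apply: hT_comp Hf (hT_id m).
- move=> a b c e p q f g h Hf Hg Hh; split.
    by apply: hT_tens => //; apply: hT_tens.
  apply: hT_cast (hT_tens Hf (hT_tens Hg Hh)); by rewrite addnA.
- by move=> n m f Hf; split=> //; apply: (hT_tens (hT_id 0) Hf).
- move=> n m f Hf; split=> //; apply: hT_cast (hT_tens Hf (hT_id 0)); by rewrite addn0.
- by move=> a b; split; [apply: hT_tens (hT_id a) (hT_id b)| apply: hT_id].
- move=> a b c e p q f f' g g' H1 H2 H3 H4; split.
    apply: hT_comp; apply: hT_tens; eassumption.
  apply: hT_tens; apply: hT_comp; eassumption.
- move=> a b; split; last exact: hT_id.
  apply: hT_comp (hT_swap a b) _; apply: hT_cast (hT_swap b a); by rewrite addnC.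
- move=> a b c e f g Hf Hg; split.
    apply: hT_comp (hT_tens Hf Hg) (hT_swap b e).
  apply: hT_comp (hT_swap a c) (hT_tens Hg Hf).
- move=> a; split; last exact: hT_id.
  apply: hT_cast (hT_swap a 0); lia.
- move=> a b c; split; first exact: hT_swap.
  apply: (hT_cast _ _ (hT_comp (hT_tens (hT_swap a b) (hT_id c)) (hT_cast (n':=b+a+c) (m' := b+(c+a)) _ _ (hT_tens (hT_id b) (hT_swap a c))))); lia.
- move=> a b c; split; first exact: hT_swap.
  apply: (hT_cast _ _ (hT_comp (hT_tens (hT_id a) (hT_swap b c)) (hT_cast (n':=a+(c+b)) (m' := c+a+b) _ _ (hT_tens (hT_swap a c) (hT_id b))))); lia.
Qed.

Lemma sw0 m : pv m m (Tswap 0 m) (Tid m).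
Proof.
have Hs : hT (Tswap 0 m) m m by apply: hT_cast (hT_swap 0 m); lia.
have H1 : pv m m (Tcomp (Tswap m 0) (Tswap 0 m)) (Tid m).
  by have := pv_swap_inv gdom gcod R m 0; rewrite addn0.
have H2 : pv m m (Tcomp (Tswap m 0) (Tswap 0 m)) (Tcomp (Tid m) (Tswap 0 m)).
  by apply: (pv_comp (m:=m)); [exact: pv_swap_unit | exact: pv_refl].
have H3 : pv m m (Tcomp (Tid m) (Tswap 0 m)) (Tswap 0 m) by apply: pv_id_l.
exact: pv_trans (pv_sym H3) (pv_trans (pv_sym H2) H1).
Qed.

Lemma comm_scal p f n m : hT p 0 0 -> hT f n m -> pv n m (Ttens p f) (Ttens f p).
Proof.
move=> Hp Hf.
have H := pv_swap_nat R (a:=0) (b:=0) Hp Hf; rewrite addn0 in H.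
have Hpf : hT (Ttens p f) n m := hT_tens Hp Hf.
have Hfp : hT (Ttens f p) n m by apply: hT_cast (hT_tens Hf Hp); lia.
have L : pv n m (Tcomp (Ttens p f) (Tswap 0 m)) (Ttens p f).
  apply: pv_trans (pv_id_r R Hpf).
  by apply: (pv_comp (m:=m)); [exact: pv_refl | exact: sw0].
have Rr : pv n m (Tcomp (Tswap 0 n) (Ttens f p)) (Ttens f p).
  apply: pv_trans (pv_id_l R Hfp).
  by apply: (pv_comp (m:=n)); [exact: sw0 | exact: pv_refl].
exact: pv_trans (pv_sym L) (pv_trans H Rr).
Qed.

Lemma EH p p' : hT p 0 0 -> hT p' 0 0 -> pv 0 0 (Tcomp p p') (Ttens p p').
Proof.
move=> Hp Hp'.
have H := pv_interchange R Hp (hT_id 0) (hT_id 0) Hp'.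
have A : pv 0 0 (Tcomp p p') (Tcomp (Ttens p (Tid 0)) (Ttens (Tid 0) p')).
  by apply: (pv_comp (m:=0)); [exact: pv_sym (pv_tens_unit_r R Hp) | exact: pv_sym (pv_tens_unit_l R Hp')].
have B : pv 0 0 (Ttens (Tcomp p (Tid 0)) (Tcomp (Tid 0) p')) (Ttens p p').
  by apply: (pv_tens (pv_id_r R Hp) (pv_id_l R Hp')).
exact: pv_trans A (pv_trans H B).
Qed.

Lemma sc_comp p p' f g n m k : hT p 0 0 -> hT p' 0 0 -> hT f n m -> hT g m k ->
  pv n k (Ttens (Ttens p p') (Tcomp f g)) (Tcomp (Ttens p f) (Ttens p' g)).
Proof.
move=> Hp Hp' Hf Hg.
have H := pv_interchange R Hp Hp' Hf Hg.
have H2 : pv n k (Ttens (Tcomp p p') (Tcomp f g)) (Ttens (Ttens p p') (Tcomp f g)).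
  apply: (pv_tens (EH Hp Hp')); apply: pv_refl; exact: hT_comp Hf Hg.
exact: pv_trans (pv_sym H2) (pv_sym H).
Qed.

Lemma sc_tens p p' f g a b c e : hT p 0 0 -> hT p' 0 0 -> hT f a b -> hT g c e ->
  pv (a+c) (b+e) (Ttens (Ttens p p') (Ttens f g)) (Ttens (Ttens p f) (Ttens p' g)).
Proof.
move=> Hp Hp' Hf Hg.
have S1 := pv_tensA R Hp Hp' (hT_tens Hf Hg).
have S2 := pv_sym (pv_tensA R Hp' Hf Hg).
have S3 : pv (a+c) (b+e) (Ttens (Ttens p' f) g) (Ttens (Ttens f p') g).
  apply: pv_tens (comm_scal Hp' Hf) (pv_refl R Hg).
have S4 := pv_tensA R Hf Hp' Hg; rewrite !addn0 in S4.
have S5 := pv_sym (pv_tensA R Hp Hf (hT_tens Hp' Hg)).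
apply: pv_trans S1 _; apply: pv_trans _ S5.
apply: (pv_tens (pv_refl R Hp)).
exact: pv_trans S2 (pv_trans S3 S4).
Qed.

Lemma sc_swapl p p' u n m : hT p 0 0 -> hT p' 0 0 -> hT u n m ->
  pv n m (Ttens (Ttens p p') u) (Ttens p' (Ttens p u)).
Proof.
move=> Hp Hp' Hu.
apply: pv_trans (pv_tensA R Hp' Hp Hu).
exact: (pv_tens (comm_scal Hp Hp') (pv_refl R Hu)).
Qed.
End Gen.

Section Tau.
Variables (G : Type) (gdom gcod : G -> nat).

Fixpoint tau (t : term (option G)) : term G :=
  match t with
  | Tid n => Tid n
  | Tswap a b => Tswap a b
  | Tgen None => Tid 0
  | Tgen (Some g) => Tgen g
  | Tcomp f g => Tcomp (tau f) (tau g)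
  | Ttens f g => Ttens (tau f) (tau g)
  end.

Fixpoint ecnt (t : term (option G)) : nat :=
  match t with
  | Tgen None => 1
  | Tcomp f g => ecnt f + ecnt g
  | Ttens f g => ecnt f + ecnt g
  | _ => 0
  end.

Lemma tdom_tau t : tdom gdom (tau t) = tdom (sdom gdom) t.
Proof. by elim: t => [n|a b|[g|]|f Hf g Hg|f Hf g Hg] //=; rewrite ?Hf ?Hg. Qed.
Lemma tcod_tau t : tcod gcod (tau t) = tcod (sdom gcod) t.
Proof. by elim: t => [n|a b|[g|]|f Hf g Hg|f Hf g Hg] //=; rewrite ?Hf ?Hg. Qed.
Lemma wt_tau t : wt gdom gcod (tau t) = wt (sdom gdom) (sdom gcod) t.
Proof. by elim: t => [n|a b|[g|]|f Hf g Hg|f Hf g Hg] //=; rewrite ?Hf ?Hg ?tcod_tau ?tdom_tau. Qed.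
Lemma hT_tau t n m : hasType gdom gcod (tau t) n m = hasType (sdom gdom) (sdom gcod) t n m.
Proof. by rewrite /hasType wt_tau tdom_tau tcod_tau. Qed.
Lemma tau_tmap C : tau (tmap Some C) = C.
Proof. by elim: C => [n|a b|g|f Hf g Hg|f Hf g Hg] //=; rewrite ?Hf ?Hg. Qed.
Lemma ecnt_tmap C : ecnt (tmap Some C) = 0.
Proof. by elim: C => [n|a b|g|f Hf g Hg|f Hf g Hg] //=; rewrite ?Hf ?Hg. Qed.
Lemma ecnt_omega k : ecnt (omega_pow G k) = k.
Proof. by elim: k => //= k ->. Qed.
Lemma tau_omega R k : prov gdom gcod R 0 0 (tau (omega_pow G k)) (Tid 0).
Proof.
elim: k => [|k IH]; first by apply: pv_refl; exact: hT_id.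
rewrite /omega_pow iterS /= -/(omega_pow G k).
have [H1 _] := prov_typed IH.
exact: pv_trans (pv_id_l R H1) IH.
Qed.
End Tau.

Section Sem.
Local Open Scope ring_scope.
Variables (G : Type) (gdom gcod : G -> nat) (d : nat).
Variable I : G -> seq 'I_d -> seq 'I_d -> CC.
Definition sc (t : term G) : CC := scalar_of (sem gdom gcod I t).

Lemma scal_id0 : sc (Tid 0) = 1.
Proof. by rewrite /sc /scalar_of /= mulr1n. Qed.
Lemma scal_tens p q : sc (Ttens p q) = sc p * sc q.
Proof. by []. Qed.
Lemma scal_comp p q : hasType gdom gcod p 0 0 -> sc (Tcomp p q) = sc q * sc p.
Proof.
case/and3P=> _ _ /eqP e.
rewrite /sc /scalar_of /=.
move: (sem gdom gcod I q) (sem gdom gcod I p); rewrite e => F1 F2.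
rewrite (big_pred1 [tuple]) // => y; apply/esym/eqP; exact: tuple0.
Qed.
Lemma sem_eq00 F F' : scalar_of F = scalar_of F' -> @sem_eq d 0 0 F F'.
Proof. by move=> E y x; rewrite [y]tuple0 [x]tuple0. Qed.
End Sem.

Section Main.
Local Open Scope ring_scope.
Variables (G : Type) (gdom gcod : G -> nat) (R : eqns G) (d : nat).
Variable I : G -> seq 'I_d -> seq 'I_d -> CC.
Variables (s : term G) (mm ll rr : nat) (zeta : CC).
Hypothesis Hs : hasType gdom gcod s 0 0.
Hypothesis Hz : (mm * ll).-primitive_root zeta.
Hypothesis Hr : zeta ^+ rr = sc gdom gcod I s.

Local Notation hT := (hasType gdom gcod).
Local Notation pv := (prov gdom gcod R).
Local Notation hTs := (hasType (sdom gdom) (sdom gcod)).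
Local Notation scs := (sc gdom gcod I).

Definition Inv n m u v := exists p q, hT p 0 0 /\ hT q 0 0 /\
  pv n m (Ttens p (tau u)) (Ttens q (tau v)) /\
  zeta ^+ ecnt u * scs q = zeta ^+ ecnt v * scs p.

Lemma inv_of n m u v : pv n m (tau u) (tau v) -> zeta ^+ ecnt u = zeta ^+ ecnt v -> Inv n m u v.
Proof.
move=> H E; exists (Tid 0), (Tid 0); do 2 (split; first exact: hT_id).
split; last by rewrite E.
exact: (pv_tens (pv_refl R (hT_id gdom gcod 0)) H).
Qed.

Lemma zeta_neq0 k : zeta ^+ k != 0.
Proof.
apply: expf_neq0; apply/negP => /eqP z0.
have := prim_expr_order Hz; rewrite z0 expr0n.
have := prim_order_gt0 Hz; case: (mm * ll)%N => // k' _ /=.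
by move/eqP; rewrite eq_sym oner_eq0.
Qed.

Lemma main_ind n m u v :
  prov (sdom gdom) (sdom gcod) (Rsharp R s mm ll rr) n m u v -> Inv n m u v.
Proof.
elim=> {n m u v}.
- move=> n m f g HR; case: HR => {n m f g}.
  + move=> n n' u1 u2 HR Hf Hg; rewrite -!hT_tau !tau_tmap in Hf Hg.
    apply: inv_of; last by rewrite !ecnt_tmap.
    by rewrite !tau_tmap; apply: pv_ax.
  + move=> _ _; apply: inv_of; first exact: tau_omega.
    by rewrite ecnt_omega (prim_expr_order Hz).
  + move=> _ _; exists s, (Tid 0); do 2 (split; first by [|exact: hT_id]).
    split; last by rewrite ecnt_omega ecnt_tmap expr0 mul1r scal_id0 mulr1 Hr.
    rewrite tau_tmap.
    apply: pv_trans (pv_tens (pv_refl R Hs) (tau_omega gdom gcod R rr)) _.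
    apply: pv_trans (pv_tens_unit_r R Hs) _.
    exact: pv_sym (pv_tens_unit_l R Hs).
- move=> n m f Hf; apply: inv_of => //; apply: pv_refl; by rewrite hT_tau.
- move=> n m f g _ [p [q [Hp [Hq [H E]]]]]; exists q, p.
  split=> //; split=> //; split; [exact: pv_sym H | by rewrite E].
- move=> n m f g h P1 [p [q [Hp [Hq [H1 E1]]]]] P2 [p' [q' [Hp' [Hq' [H2 E2]]]]].
  have [Tf Tg] := prov_typed P1; have [_ Th] := prov_typed P2.
  rewrite -!hT_tau in Tf Tg Th.
  exists (Ttens p p'), (Ttens q q').
  split; first exact: (hT_tens Hp Hp').
  split; first exact: (hT_tens Hq Hq').
  split.
    apply: pv_trans (sc_swapl R Hp Hp' Tf) _.
    apply: pv_trans (pv_tens (pv_refl R Hp') H1) _.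
    apply: pv_trans (pv_sym (sc_swapl R Hq Hp' Tg)) _.
    apply: pv_trans (pv_tensA R Hq Hp' Tg) _.
    apply: pv_trans (pv_tens (pv_refl R Hq) H2) _.
    exact: pv_sym (pv_tensA R Hq Hq' Th).
  apply: (mulfI (zeta_neq0 (ecnt g))).
  rewrite !scal_tens.
  transitivity ((zeta ^+ ecnt f * scs q) * (zeta ^+ ecnt g * scs q')); first by ring.
  rewrite E1 E2; ring.
- move=> n m k f f' g g' P1 [p [q [Hp [Hq [H1 E1]]]]] P2 [p' [q' [Hp' [Hq' [H2 E2]]]]].
  have [Tf Tf'] := prov_typed P1; have [Tg Tg'] := prov_typed P2.
  rewrite -!hT_tau in Tf Tg Tf' Tg'.
  exists (Ttens p p'), (Ttens q q').
  split; first exact: (hT_tens Hp Hp').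
  split; first exact: (hT_tens Hq Hq').
  split.
    apply: pv_trans (sc_comp R Hp Hp' Tf Tg) _.
    apply: pv_trans (pv_comp H1 H2) _.
    exact: pv_sym (sc_comp R Hq Hq' Tf' Tg').
  rewrite /= !scal_tens !exprD.
  transitivity ((zeta ^+ ecnt f * scs q) * (zeta ^+ ecnt g * scs q')); first by ring.
  rewrite E1 E2; ring.
- move=> a b c e f f' g g' P1 [p [q [Hp [Hq [H1 E1]]]]] P2 [p' [q' [Hp' [Hq' [H2 E2]]]]].
  have [Tf Tf'] := prov_typed P1; have [Tg Tg'] := prov_typed P2.
  rewrite -!hT_tau in Tf Tg Tf' Tg'.
  exists (Ttens p p'), (Ttens q q').
  split; first exact: (hT_tens Hp Hp').
  split; first exact: (hT_tens Hq Hq').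
  split.
    apply: pv_trans (sc_tens R Hp Hp' Tf Tg) _.
    apply: pv_trans (pv_tens H1 H2) _.
    exact: pv_sym (sc_tens R Hq Hq' Tf' Tg').
  rewrite /= !scal_tens !exprD.
  transitivity ((zeta ^+ ecnt f * scs q) * (zeta ^+ ecnt g * scs q')); first by ring.
  rewrite E1 E2; ring.
- move=> n m k p f g h Hf Hg Hh; rewrite -!hT_tau in Hf Hg Hh.
  apply: inv_of => /=; [exact (pv_compA R Hf Hg Hh) | by rewrite /= addnA].
- move=> n m f Hf; rewrite -!hT_tau in Hf.
  apply: inv_of => /=; [exact (pv_id_l R Hf) | by rewrite /= add0n].
- move=> n m f Hf; rewrite -!hT_tau in Hf.
  apply: inv_of => /=; [exact (pv_id_r R Hf) | by rewrite /= addn0].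
- move=> a b c e p q f g h Hf Hg Hh; rewrite -!hT_tau in Hf Hg Hh.
  apply: inv_of => /=; [exact (pv_tensA R Hf Hg Hh) | by rewrite /= addnA].
- move=> n m f Hf; rewrite -!hT_tau in Hf.
  apply: inv_of => /=; [exact (pv_tens_unit_l R Hf) | by rewrite /= add0n].
- move=> n m f Hf; rewrite -!hT_tau in Hf.
  apply: inv_of => /=; [exact (pv_tens_unit_r R Hf) | by rewrite /= addn0].
- by move=> a b; apply: inv_of => /=; [exact: pv_tens_id |].
- move=> a b c e p q f f' g g' H1 H2 H3 H4; rewrite -!hT_tau in H1 H2 H3 H4.
  apply: inv_of => /=; [exact (pv_interchange R H1 H2 H3 H4) | congr (_ ^+ _); rewrite /=; lia].
- by move=> a b; apply: inv_of => /=; [exact: pv_swap_inv |].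
- move=> a b c e f g Hf Hg; rewrite -!hT_tau in Hf Hg.
  apply: inv_of => /=; [exact (pv_swap_nat R Hf Hg) | congr (_ ^+ _); rewrite /=; lia].
- by move=> a; apply: inv_of => /=; [exact: pv_swap_unit |].
- by move=> a b c; apply: inv_of => /=; [exact: pv_hex1 |].
- by move=> a b c; apply: inv_of => /=; [exact: pv_hex2 |].
Qed.
End Main.

Local Open Scope ring_scope.

Theorem mainTheorem3
  (G : Type) (gdom gcod : G -> nat) (R : eqns G) (d : nat)
  (I : G -> seq 'I_d -> seq 'I_d -> CC)
  (s : term G) (m l r : nat) (zeta : CC)
  (* the interpretation [[-]]_src = sem gdom gcod I is well defined on P/R *)
  (Hsound : forall n n' t1 t2, R n n' t1 t2 ->
      sem_eq n n' (sem gdom gcod I t1) (sem gdom gcod I t2))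
  (* ... and faithful *)
  (Hfaith : forall n n' t1 t2,
      hasType gdom gcod t1 n n' -> hasType gdom gcod t2 n n' ->
      sem_eq n n' (sem gdom gcod I t1) (sem gdom gcod I t2) ->
      prov gdom gcod R n n' t1 t2)
  (* C^src (the image) is endomorphism-only *)
  (Hendo : forall t n n', hasType gdom gcod t n n' -> n = n')
  (* s is a source scalar *)
  (Hs : hasType gdom gcod s 0 0)
  (* C^src(0,0) is generated by [[s]] ... *)
  (Hgen : forall t, hasType gdom gcod t 0 0 ->
      exists k, scalar_of (sem gdom gcod I t) = scalar_of (sem gdom gcod I s) ^+ k)
  (* ... and is cyclic of order m *)
  (Hord : m.-primitive_root (scalar_of (sem gdom gcod I s)))
  (* no hidden phases *)
  (Hphase : forall n (lam : CC), `|lam| = 1 ->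
      (exists t, hasType gdom gcod t n n /\
                 sem_eq n n (sem gdom gcod I t) (@scal_id d lam)) ->
      exists t0, hasType gdom gcod t0 0 0 /\ scalar_of (sem gdom gcod I t0) = lam)
  (* every morphism of C^src is invertible in C^src *)
  (Hinv : forall t n n', hasType gdom gcod t n n' ->
      exists t', hasType gdom gcod t' n' n /\
        sem_eq n n (sem gdom gcod I (Tcomp t t')) (sem gdom gcod I (Tid n)) /\
        sem_eq n' n' (sem gdom gcod I (Tcomp t' t)) (sem gdom gcod I (Tid n')))
  (Hl : (0 < l)%N)
  (Hzeta : (m * l).-primitive_root zeta)
  (Hr : zeta ^+ r = scalar_of (sem gdom gcod I s)) :
  forall (n n' : nat) (C1 C2 : term G),
    prov (sdom gdom) (sdom gcod) (Rsharp R s m l r) n n'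
         (tmap Some C1) (tmap Some C2) ->
    prov gdom gcod R n n' C1 C2.

Proof.
move=> n n' C1 C2 H.
have [Ht1 Ht2] := prov_typed H.
rewrite -!hT_tau !tau_tmap in Ht1 Ht2.
have [p [q [Hp [Hq [Hpv E]]]]] := main_ind Hs Hzeta Hr H.
rewrite !tau_tmap !ecnt_tmap !expr0 !mul1r in Hpv E.
have [p' [Hp' [Hi1 _]]] := Hinv p 0 0 Hp.
have E1 : sc gdom gcod I (Tcomp p p') = sc gdom gcod I (Tid 0) by have := Hi1 [tuple] [tuple].
have P1 : prov gdom gcod R 0 0 (Tcomp p p') (Tid 0).
  exact: Hfaith (hT_comp Hp Hp') (hT_id gdom gcod 0) Hi1.
have P2 : prov gdom gcod R 0 0 (Tcomp q p') (Tid 0).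
  apply: Hfaith; [exact: hT_comp Hq Hp' | exact: hT_id |].
  apply: sem_eq00; rewrite -/(sc gdom gcod I _) -/(sc gdom gcod I (Tid 0)).
  by rewrite -E1 !scal_comp // E.
have Hid := hT_id gdom gcod n'.
have A1 : prov gdom gcod R n n' C1 (Ttens (Tcomp p p') (Tcomp C1 (Tid n'))).
  apply: pv_trans (pv_sym (pv_tens_unit_l R Ht1)) _.
  exact: (pv_tens (pv_sym P1) (pv_sym (pv_id_r R Ht1))).
have A2 : prov gdom gcod R n n' C2 (Ttens (Tcomp q p') (Tcomp C2 (Tid n'))).
  apply: pv_trans (pv_sym (pv_tens_unit_l R Ht2)) _.
  exact: (pv_tens (pv_sym P2) (pv_sym (pv_id_r R Ht2))).
apply: pv_trans A1 _; apply: pv_trans _ (pv_sym A2).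
apply: pv_trans (pv_sym (pv_interchange R Hp Hp' Ht1 Hid)) _.
apply: pv_trans _ (pv_interchange R Hq Hp' Ht2 Hid).
apply: (pv_comp Hpv); exact: pv_refl (hT_tens Hp' Hid).
Qed.
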